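(* Let $\left|\psi\right\rangle$ be a pure three-qubit state of parties $A,B,C$. For $X\in\{A,B,C\}$ define $$E^X_{LOCC}(\left|\psi\right\rangle)=\max\sum_{i=0}^1p_i\,E(|\psi_i\rangle),$$ where the maximum is over all orthonormal bases $\{|x_0\rangle,|x_1\rangle\}$ of party $X$'s qubit, $p_i=\|(\langle x_i|_X\otimes I)\left|\psi\right\rangle\|^2$, $|\psi_i\rangle=p_i^{-1/2}(\langle x_i|_X\otimes I)\left|\psi\right\rangle$ is the resulting pure state of the two remaining qubits, and $E$ is the entanglement entropy (von Neumann entropy, base 2, of either one-qubit reduced state). Let $E_{LOCC}(\left|\psi\right\rangle)=\max\{E^A_{LOCC},E^B_{LOCC},E^C_{LOCC}\}$. Then $$E_{MB}(\left|\psi\right\rangle)\ \ge\ E_{LOCC}(\left|\psi\right\rangle),$$ i.e. the entanglement measurement bound of a pure tripartite qubit state does not increase on average under a complete local projective measurement of one party.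
   Context: Entanglement measurement bound (EMB). Let $\left|\psi\right\rangle$ be a unit vector in $\mathcal{H}_1\otimes\cdots\otimes\mathcal{H}_N$, $\mathcal{H}_j=\mathbb{C}^{d_j}$. An adaptive local measurement scheme consists of: an ordering $\pi$ of the parties $\{1,\dots,N\}$; an orthonormal basis $\{|\phi^{(1)}_{i_1}\rangle\}_{i_1}$ of $\mathcal{H}_{\pi(1)}$; and, for each $k=2,\dots,N$ and each outcome history $(i_1,\dots,i_{k-1})$, an orthonormal basis $\{|\phi^{(k)}_{i_k|i_1\dots i_{k-1}}\rangle\}_{i_k}$ of $\mathcal{H}_{\pi(k)}$ (which may depend on the history). Its outcome distribution is $p_{i_1\dots i_N}=\big|\big(\langle\phi^{(1)}_{i_1}|\otimes\langle\phi^{(2)}_{i_2|i_1}|\otimes\cdots\otimes\langle\phi^{(N)}_{i_N|i_1\dots i_{N-1}}|\big)\left|\psi\right\rangle\big|^2$, where the $k$-th bra acts on the tensor factor of party $\pi(k)$. The EMB is $E_{MB}(\left|\psi\right\rangle)=\min H(\mathbf{p})$, where $H(\mathbf{p})=-\sum p_{i_1\dots i_N}\log_2 p_{i_1\dots i_N}$ is the Shannon entropy and the minimum is over all adaptive local measurement schemes (including all orderings of the parties). *)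

(* Defs.v *)
From Stdlib Require Import Reals.
Open Scope R_scope.

Definition C := (R * R)%type.
Definition C0 : C := (0, 0).
Definition Cadd (z w : C) : C := (fst z + fst w, snd z + snd w).
Definition Cmul (z w : C) : C :=
  (fst z * fst w - snd z * snd w, fst z * snd w + snd z * fst w).
Definition Cconj (z : C) : C := (fst z, - snd z).
Definition Cscale (r : R) (z : C) : C := (r * fst z, r * snd z).
Definition Cnorm2 (z : C) : R := fst z * fst z + snd z * snd z.

Definition Csum2 (f : bool -> C) : C := Cadd (f false) (f true).
Definition Rsum2 (f : bool -> R) : R := f false + f true.

Definition qubit := bool -> C.
Definition state3 := bool -> bool -> bool -> C.  (* psi a b c, parties A,B,C *)
Definition state2 := bool -> bool -> C.

Definition inner (u v : qubit) : C := Csum2 (fun k => Cmul (Cconj (u k)) (v k)).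

Definition orthonormal_basis (x : bool -> qubit) : Prop :=
  forall i j, inner (x i) (x j) = (if Bool.eqb i j then (1, 0) else C0).

Definition is_unit3 (psi : state3) : Prop :=
  Rsum2 (fun a => Rsum2 (fun b => Rsum2 (fun c => Cnorm2 (psi a b c)))) = 1.

(* x log2 x, with the convention 0 log 0 = 0 *)
Definition xlog2x (x : R) : R := if Rle_dec x 0 then 0 else x * (ln x / ln 2).

Definition shannon3 (p : bool -> bool -> bool -> R) : R :=
  - Rsum2 (fun i => Rsum2 (fun j => Rsum2 (fun k => xlog2x (p i j k)))).

Definition rho (phi : state2) (j j' : bool) : C :=
  Csum2 (fun k => Cmul (phi j k) (Cconj (phi j' k))).

(* The eigenvalues of the Hermitian 2x2 matrix rho are the two roots of its
   characteristic polynomial x^2 - tr(rho) x + det(rho). *)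
Definition rho_tr (phi : state2) : R := fst (rho phi false false) + fst (rho phi true true).
Definition rho_det (phi : state2) : R :=
  fst (Cadd (Cmul (rho phi false false) (rho phi true true))
            (Cscale (-1) (Cmul (rho phi false true) (rho phi true false)))).
Definition rho_eig (phi : state2) (s : bool) : R :=
  (rho_tr phi + (if s then 1 else -1) *
     sqrt (rho_tr phi * rho_tr phi - 4 * rho_det phi)) / 2.

Definition ent_entropy (phi : state2) : R :=
  - Rsum2 (fun s => xlog2x (rho_eig phi s)).

Inductive party := PA | PB | PC.

Definition party_eqb (X Y : party) : bool :=
  match X, Y with PA, PA | PB, PB | PC, PC => true | _, _ => false end.

Definition amp3 (psi : state3) (fA fB fC : qubit) : C :=
  Csum2 (fun a => Csum2 (fun b => Csum2 (fun c =>
    Cmul (Cconj (fA a)) (Cmul (Cconj (fB b)) (Cmul (Cconj (fC c)) (psi a b c)))))).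

Record scheme := Scheme {
  ord1 : party; ord2 : party; ord3 : party;
  bas1 : bool -> qubit;
  bas2 : bool -> bool -> qubit;                  (* phi^(2)_{i2 | i1}: bas2 i1 i2 *)
  bas3 : bool -> bool -> bool -> qubit           (* phi^(3)_{i3 | i1 i2}: bas3 i1 i2 i3 *)
}.

Definition valid_scheme (s : scheme) : Prop :=
  ord1 s <> ord2 s /\ ord1 s <> ord3 s /\ ord2 s <> ord3 s /\
  orthonormal_basis (bas1 s) /\
  (forall i1, orthonormal_basis (bas2 s i1)) /\
  (forall i1 i2, orthonormal_basis (bas3 s i1 i2)).

Definition scheme_vec (s : scheme) (i1 i2 i3 : bool) (X : party) : qubit :=
  if party_eqb X (ord1 s) then bas1 s i1
  else if party_eqb X (ord2 s) then bas2 s i1 i2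
  else bas3 s i1 i2 i3.

Definition scheme_prob (psi : state3) (s : scheme) (i1 i2 i3 : bool) : R :=
  Cnorm2 (amp3 psi (scheme_vec s i1 i2 i3 PA) (scheme_vec s i1 i2 i3 PB)
                   (scheme_vec s i1 i2 i3 PC)).

(* H(p) for the outcome distribution of scheme s; E_MB is its minimum over s *)
Definition scheme_entropy (psi : state3) (s : scheme) : R :=
  shannon3 (scheme_prob psi s).

(* unnormalized post-measurement state (<x|_X ⊗ I)|psi> of the remaining two
   qubits (kept in their natural order) *)
Definition post_state (psi : state3) (X : party) (x : qubit) : state2 :=
  match X with
  | PA => fun j k => Csum2 (fun a => Cmul (Cconj (x a)) (psi a j k))
  | PB => fun j k => Csum2 (fun b => Cmul (Cconj (x b)) (psi j b k))
  | PC => fun j k => Csum2 (fun c => Cmul (Cconj (x c)) (psi j k c))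
  end.

Definition post_prob (psi : state3) (X : party) (x : qubit) : R :=
  Rsum2 (fun j => Rsum2 (fun k => Cnorm2 (post_state psi X x j k))).

(* p * E(psi_x), with psi_x = p^{-1/2} (<x|_X ⊗ I)|psi>; the term is 0 when p = 0 *)
Definition weighted_term (psi : state3) (X : party) (x : qubit) : R :=
  let p := post_prob psi X x in
  if Req_EM_T p 0 then 0
  else p * ent_entropy (fun j k => Cscale (/ sqrt p) (post_state psi X x j k)).

(* sum_i p_i E(psi_i) for the basis {x_0, x_1} of party X;
   E^X_LOCC is its maximum over bases, E_LOCC the max over X *)
Definition locc_average (psi : state3) (X : party) (x : bool -> qubit) : R :=
  Rsum2 (fun i => weighted_term psi X (x i)).

(* Main.v *)
Require Import Defs.
From Stdlib Require Import Reals Lra Psatz List Classical.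
Open Scope R_scope.


Definition L (x : R) : R := if Rle_dec x 0 then 0 else x * ln x.

Lemma L_pos x : 0 < x -> L x = x * ln x.
Proof. intro H. unfold L. destruct (Rle_dec x 0); [lra|auto]. Qed.
Lemma L_nonpos x : x <= 0 -> L x = 0.
Proof. intro H. unfold L. destruct (Rle_dec x 0); [auto|lra]. Qed.

Lemma ln2_pos : 0 < ln 2.
Proof. pose proof ln_lt_2. lra. Qed.

Lemma xlog2x_L x : xlog2x x = L x / ln 2.
Proof. pose proof ln2_pos. unfold xlog2x, L. destruct (Rle_dec x 0); field; lra. Qed.

Lemma ln_le_sub1 u : 0 < u -> ln u <= u - 1.
Proof. intro H. pose proof (exp_ineq1_le (ln u)). rewrite exp_ln in H0; lra. Qed.

Lemma ln_ge_1_inv u : 0 < u -> 1 - / u <= ln u.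
Proof. intro H. pose proof (ln_le_sub1 (/ u) (Rinv_0_lt_compat _ H)).
  rewrite ln_Rinv in H0; lra. Qed.

Lemma ln_le x y : 0 < x -> x <= y -> ln x <= ln y.
Proof. intros H1 H2. destruct H2. left; apply ln_increasing; auto. subst; lra. Qed.

Lemma ln_div x y : 0 < x -> 0 < y -> ln (x / y) = ln x - ln y.
Proof. intros. unfold Rdiv. rewrite ln_mult, ln_Rinv; try lra; auto. apply Rinv_0_lt_compat; auto. Qed.

Lemma L_tangent x y : 0 < x -> 0 <= y -> L x + (y - x) * (ln x + 1) <= L y.
Proof.
  intros Hx Hy. rewrite (L_pos x Hx). destruct Hy as [Hy|Hy].
  - rewrite (L_pos y Hy).
    pose proof (ln_ge_1_inv (y / x)) as H.
    assert (0 < y / x) by (apply Rdiv_lt_0_compat; auto).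
    specialize (H H0). rewrite ln_div in H by auto.
    assert (E: / (y / x) = x / y) by (field; lra). rewrite E in H.
    assert (y * (1 - x / y) <= y * (ln y - ln x)) by (apply Rmult_le_compat_l; lra).
    assert (y * (1 - x/y) = y - x) by (field; lra). nra.
  - subst. rewrite L_nonpos by lra. nra.
Qed.

Lemma L_superadd a b : 0 <= a -> 0 <= b -> L a + L b <= L (a + b).
Proof.
  intros Ha Hb. destruct Ha as [Ha|Ha]; [|subst; rewrite (L_nonpos 0) by lra; replace (0+b) with b by ring; lra].
  destruct Hb as [Hb|Hb]; [|subst; rewrite (L_nonpos 0) by lra; replace (a+0) with a by ring; lra].
  rewrite !L_pos by lra.
  assert (ln a <= ln (a+b)) by (apply ln_le; lra).
  assert (ln b <= ln (a+b)) by (apply ln_le; lra). nra.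
Qed.

Lemma L_spread a b d : 0 <= b -> b <= a -> 0 <= d -> d <= b -> L a + L b <= L (a + d) + L (b - d).
Proof.
  intros Hb Hab Hd Hdb. destruct Hb as [Hb|Hb].
  - pose proof (L_tangent a (a+d) ltac:(lra) ltac:(lra)).
    pose proof (L_tangent b (b-d) ltac:(lra) ltac:(lra)).
    assert (ln b <= ln a) by (apply ln_le; lra). nra.
  - subst. assert (d = 0) by lra. subst. replace (a+0) with a by ring. replace (0-0) with 0 by ring. lra.
Qed.

Lemma L_ge_bin x : 0 <= x <= 1 -> - ln 2 <= L x + L (1 - x).
Proof.
  intro H. pose proof (L_tangent (/2) x ltac:(lra) ltac:(lra)).
  pose proof (L_tangent (/2) (1-x) ltac:(lra) ltac:(lra)).
  rewrite L_pos in H0, H1 by lra. rewrite ln_Rinv in H0, H1 by lra. lra.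
Qed.

Lemma L_le_half x : 0 <= x <= /2 -> L x <= - (x * ln 2).
Proof.
  intro H. destruct (Rle_dec x 0). rewrite L_nonpos by lra. assert (x = 0) by lra. subst; lra.
  rewrite L_pos by lra. assert (ln x <= ln (/2)) by (apply ln_le; lra). rewrite ln_Rinv in H0 by lra. nra.
Qed.

Definition g2 (a b : R) := L (a + b) - L a - L b.

Lemma g2_tangent a b A B : 0 <= a -> 0 <= b -> 0 < A -> 0 < B ->
  g2 a b <= a * ln ((A + B) / A) + b * ln ((A + B) / B).
Proof.
  intros Ha Hb HA HB. unfold g2.
  assert (l1: 0 <= ln ((A+B)/A)). { rewrite ln_div by lra. pose proof (ln_le A (A+B)). lra. }
  assert (l2: 0 <= ln ((A+B)/B)). { rewrite ln_div by lra. pose proof (ln_le B (A+B)). lra. }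
  destruct Ha as [Ha|Ha]; [|subst; rewrite (L_nonpos 0) by lra; replace (0+b) with b by ring; nra].
  destruct Hb as [Hb|Hb]; [|subst; rewrite (L_nonpos 0) by lra; replace (a+0) with a by ring; nra].
  rewrite !L_pos by lra.
  pose proof (ln_ge_1_inv ((A+B)*a/(A*(a+b))) ltac:(apply Rdiv_lt_0_compat; nra)) as H1.
  pose proof (ln_ge_1_inv ((A+B)*b/(B*(a+b))) ltac:(apply Rdiv_lt_0_compat; nra)) as H2.
  rewrite !ln_div, !ln_mult in H1, H2 by nra.
  rewrite !ln_div by lra.
  assert (E1: / ((A + B) * a / (A * (a + b))) = A * (a+b) / ((A+B) * a)) by (field; nra).
  assert (E2: / ((A + B) * b / (B * (a + b))) = B * (a+b) / ((A+B) * b)) by (field; nra).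
  rewrite E1 in H1. rewrite E2 in H2.
  apply (Rmult_le_compat_l a) in H1; [|lra].
  apply (Rmult_le_compat_l b) in H2; [|lra].
  assert (a * (1 - A * (a + b) / ((A + B) * a)) + b * (1 - B * (a + b) / ((A + B) * b)) = 0) by (field; nra).
  nra.
Qed.

Lemma g2_zero_l b : g2 0 b = 0.
Proof. unfold g2. rewrite (L_nonpos 0) by lra. replace (0+b) with b by ring. ring. Qed.
Lemma g2_zero_r a : g2 a 0 = 0.
Proof. unfold g2. rewrite (L_nonpos 0) by lra. replace (a+0) with a by ring. ring. Qed.

Lemma g2_superadd a1 b1 a2 b2 : 0 <= a1 -> 0 <= b1 -> 0 <= a2 -> 0 <= b2 ->
  g2 a1 b1 + g2 a2 b2 <= g2 (a1 + a2) (b1 + b2).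
Proof.
  intros. destruct (Req_dec (a1+a2) 0).
  { assert (a1 = 0) by lra; assert (a2 = 0) by lra; subst. rewrite Rplus_0_l, !g2_zero_l. lra. }
  destruct (Req_dec (b1+b2) 0).
  { assert (b1 = 0) by lra; assert (b2 = 0) by lra; subst. rewrite Rplus_0_l, !g2_zero_r. lra. }
  pose proof (g2_tangent a1 b1 (a1+a2) (b1+b2) H H0 ltac:(lra) ltac:(lra)).
  pose proof (g2_tangent a2 b2 (a1+a2) (b1+b2) H1 H2 ltac:(lra) ltac:(lra)).
  assert (g2 (a1+a2) (b1+b2) = (a1+a2) * ln ((a1+a2+(b1+b2))/(a1+a2)) + (b1+b2) * ln ((a1+a2+(b1+b2))/(b1+b2))).
  { unfold g2. rewrite !L_pos by lra. rewrite !ln_div by lra. ring. }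
  lra.
Qed.


Fixpoint sumL (l : list R) : R := match l with nil => 0 | x :: r => L x + sumL r end.
Fixpoint suml (l : list R) : R := match l with nil => 0 | x :: r => x + suml r end.

Lemma sumL_app l1 l2 : sumL (l1 ++ l2) = sumL l1 + sumL l2.
Proof. induction l1; simpl; lra. Qed.
Lemma suml_app l1 l2 : suml (l1 ++ l2) = suml l1 + suml l2.
Proof. induction l1; simpl; lra. Qed.

Lemma suml_nonneg l : (forall x, In x l -> 0 <= x) -> 0 <= suml l.
Proof. induction l; simpl; intros; [lra|]. pose proof (H a (or_introl eq_refl)).
  assert (0 <= suml l) by (apply IHl; auto). lra. Qed.

Lemma sumL_sub l : (forall x, In x l -> 0 <= x) -> sumL l <= L (suml l).
Proof.
  induction l; simpl; intros.
  - rewrite L_nonpos; lra.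
  - pose proof (H a (or_introl eq_refl)).
    assert (sumL l <= L (suml l)) by (apply IHl; auto).
    pose proof (L_superadd a (suml l) H0 (suml_nonneg l (fun x h => H x (or_intror h)))). lra.
Qed.

Lemma sumL_half l : (forall x, In x l -> 0 <= x <= /2) -> sumL l <= - (ln 2 * suml l).
Proof.
  induction l; simpl; intros.
  - lra.
  - pose proof (L_le_half a (H a (or_introl eq_refl))).
    assert (sumL l <= - (ln 2 * suml l)) by (apply IHl; auto). lra.
Qed.

Lemma entropy_bound l lam : (forall x, In x l -> 0 <= x <= lam) -> suml l = 1 ->
  /2 <= lam <= 1 -> sumL l <= L lam + L (1 - lam).
Proof.
  intros Hl Hs Hlam.
  destruct (classic (exists x, In x l /\ /2 < x)) as [[x [Hx Hx2]]|Hn].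
  - destruct (in_split x l Hx) as [l1 [l2 E]]. subst l.
    rewrite sumL_app in *. rewrite suml_app in Hs. simpl in *.
    assert (sumL l1 + sumL l2 <= L (suml (l1 ++ l2))).
    { rewrite <- sumL_app. apply sumL_sub. intros y Hy. apply Hl. apply in_app_or in Hy.
      apply in_or_app. destruct Hy; [left|right; right]; auto. }
    rewrite suml_app in H.
    replace (suml l1 + suml l2) with (1 - x) in H by lra.
    assert (Hxl : x <= lam) by (apply Hl; apply in_or_app; right; left; auto).
    pose proof (L_spread x (1 - x) (lam - x) ltac:(lra) ltac:(lra) ltac:(lra) ltac:(lra)).
    replace (x + (lam - x)) with lam in H0 by ring.
    replace (1 - x - (lam - x)) with (1 - lam) in H0 by ring. lra.
  - assert (forall y, In y l -> 0 <= y <= /2).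
    { intros y Hy. destruct (Rle_dec y (/2)). split; auto. apply Hl; auto.
      exfalso. apply Hn. exists y. split; auto. lra. }
    pose proof (sumL_half l H). rewrite Hs in H0.
    pose proof (L_ge_bin lam ltac:(lra)). lra.
Qed.


Definition G (t R : R) := g2 ((t + R) / 2) ((t - R) / 2).

Lemma G_mono t R1 R2 : 0 <= R1 -> R1 <= R2 -> R2 <= t -> G t R2 <= G t R1.
Proof.
  intros. unfold G, g2.
  pose proof (L_spread ((t+R1)/2) ((t-R1)/2) ((R2-R1)/2) ltac:(lra) ltac:(lra) ltac:(lra) ltac:(lra)).
  replace ((t + R1) / 2 + (R2 - R1) / 2) with ((t+R2)/2) in H2 by field.
  replace ((t - R1) / 2 - (R2 - R1) / 2) with ((t-R2)/2) in H2 by field.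
  replace ((t + R2) / 2 + (t - R2) / 2) with t by field.
  replace ((t + R1) / 2 + (t - R1) / 2) with t by field. lra.
Qed.

Lemma G_superadd t1 R1 t2 R2 R : 0 <= R1 <= t1 -> 0 <= R2 <= t2 -> 0 <= R -> R <= R1 + R2 ->
  G t1 R1 + G t2 R2 <= G (t1 + t2) R.
Proof.
  intros. unfold G at 1 2.
  pose proof (g2_superadd ((t1 + R1) / 2) ((t1 - R1) / 2) ((t2 + R2) / 2) ((t2 - R2) / 2)
     ltac:(lra) ltac:(lra) ltac:(lra) ltac:(lra)).
  replace ((t1 + R1) / 2 + (t2 + R2) / 2) with ((t1 + t2 + (R1+R2))/2) in H3 by field.
  replace ((t1 - R1) / 2 + (t2 - R2) / 2) with ((t1 + t2 - (R1+R2))/2) in H3 by field.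
  pose proof (G_mono (t1+t2) R (R1+R2) H1 H2 ltac:(lra)). unfold G in *. lra.
Qed.

Definition Dq (a d cr ci : R) := (a - d)^2 + 4 * (cr^2 + ci^2).

Lemma Dq_nonneg a d cr ci : 0 <= Dq a d cr ci.
Proof. unfold Dq. pose proof (pow2_ge_0 (a-d)); pose proof (pow2_ge_0 cr); pose proof (pow2_ge_0 ci); lra. Qed.

Lemma sqrt_le_of_sq X Y : 0 <= Y -> X <= Y * Y -> sqrt X <= Y.
Proof. intros. rewrite <- (sqrt_square Y) by auto. apply sqrt_le_1_alt. auto. Qed.

Lemma le_sqrt_of_sq Z P : Z * Z <= P -> Z <= sqrt P.
Proof. intros. apply Rle_trans with (Rabs Z). apply Rle_abs.
  rewrite <- sqrt_Rsqr_abs. apply sqrt_le_1_alt. unfold Rsqr. auto. Qed.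

Lemma Dq_triangle a1 d1 cr1 ci1 a2 d2 cr2 ci2 :
  sqrt (Dq (a1+a2) (d1+d2) (cr1+cr2) (ci1+ci2)) <= sqrt (Dq a1 d1 cr1 ci1) + sqrt (Dq a2 d2 cr2 ci2).
Proof.
  pose proof (Dq_nonneg a1 d1 cr1 ci1). pose proof (Dq_nonneg a2 d2 cr2 ci2).
  pose proof (sqrt_pos (Dq a1 d1 cr1 ci1)). pose proof (sqrt_pos (Dq a2 d2 cr2 ci2)).
  apply sqrt_le_of_sq. lra.
  set (dot := (a1-d1)*(a2-d2) + 4*(cr1*cr2+ci1*ci2)).
  assert (dot <= sqrt (Dq a1 d1 cr1 ci1) * sqrt (Dq a2 d2 cr2 ci2)).
  { rewrite <- sqrt_mult by auto. apply le_sqrt_of_sq. unfold dot, Dq.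
    set (u1 := a1 - d1). set (u2 := a2 - d2).
    assert (E: ((u1 ^ 2 + 4 * (cr1 ^ 2 + ci1 ^ 2)) * (u2 ^ 2 + 4 * (cr2 ^ 2 + ci2 ^ 2)))
      - (u1 * u2 + 4 * (cr1 * cr2 + ci1 * ci2)) * (u1 * u2 + 4 * (cr1 * cr2 + ci1 * ci2))
      = 4 * (u1*cr2 - u2*cr1)^2 + 4*(u1*ci2-u2*ci1)^2 + 16*(cr1*ci2-cr2*ci1)^2) by ring.
    pose proof (pow2_ge_0 (u1*cr2 - u2*cr1)); pose proof (pow2_ge_0 (u1*ci2-u2*ci1)); pose proof (pow2_ge_0 (cr1*ci2-cr2*ci1)).
    lra. }
  assert (Dq (a1 + a2) (d1 + d2) (cr1 + cr2) (ci1 + ci2) = Dq a1 d1 cr1 ci1 + Dq a2 d2 cr2 ci2 + 2 * dot)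
    by (unfold Dq, dot; ring).
  rewrite H4. 
  pose proof (sqrt_sqrt _ H). pose proof (sqrt_sqrt _ H0). nra.
Qed.


Lemma complete_real p0 q0 p1 q1 r0 s0 r1 s1 :
  p0*p0+q0*q0+(p1*p1+q1*q1) = 1 -> r0*r0+s0*s0+(r1*r1+s1*s1) = 1 ->
  p0*r0 + q0*s0 + (p1*r1 + q1*s1) = 0 -> p0*s0 - q0*r0 + (p1*s1 - q1*r1) = 0 ->
  p0*p0+q0*q0+(r0*r0+s0*s0) = 1 /\ p1*p1+q1*q1+(r1*r1+s1*s1) = 1 /\
  p0*p1 + q0*q1 + (r0*r1 + s0*s1) = 0 /\ p0*q1 - q0*p1 + (r0*s1 - s0*r1) = 0.
Proof.
  intros H1 H2 I1 I2.
  set (A := p0*p0+q0*q0). set (B := p1*p1+q1*q1). set (Cc := r0*r0+s0*s0). set (D := r1*r1+s1*s1).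
  assert (E1 : A * Cc = B * D).
  { assert (A*Cc = (p0*r0+q0*s0)^2 + (p0*s0-q0*r0)^2) by (unfold A, Cc; ring).
    assert (B*D = (p1*r1+q1*s1)^2 + (p1*s1-q1*r1)^2) by (unfold B, D; ring).
    rewrite H, H0. replace (p0*r0+q0*s0) with (-(p1*r1+q1*s1)) by lra.
    replace (p0*s0-q0*r0) with (-(p1*s1-q1*r1)) by lra. ring. }
  assert (HAC : A + Cc = 1).
  { assert (B = 1 - A) by (unfold A, B in *; lra). assert (D = 1 - Cc) by (unfold Cc, D in *; lra).
    rewrite H, H0 in E1. nra. }
  set (gr := p0*p1 + q0*q1 + (r0*r1 + s0*s1)). set (gi := p0*q1 - q0*p1 + (r0*s1 - s0*r1)).
  set (I1v := p0*r0 + q0*s0 + (p1*r1 + q1*s1)). set (I2v := p0*s0 - q0*r0 + (p1*s1 - q1*r1)).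
  assert (F1 : p0*gr - q0*gi = (A - D)*p1 + I1v*r1 + I2v*s1) by (unfold A, D, gr, gi, I1v, I2v; ring).
  assert (F2 : p0*gi + q0*gr = (A - D)*q1 + I1v*s1 - I2v*r1) by (unfold A, D, gr, gi, I1v, I2v; ring).
  assert (F3 : r0*gr - s0*gi = I1v*p1 - I2v*q1 + (Cc - B)*r1) by (unfold Cc, B, gr, gi, I1v, I2v; ring).
  assert (F4 : r0*gi + s0*gr = I1v*q1 + I2v*p1 + (Cc - B)*s1) by (unfold Cc, B, gr, gi, I1v, I2v; ring).
  assert (HD : A - D = 0) by (unfold A, B, Cc, D in *; lra).
  assert (HB : Cc - B = 0) by (unfold A, B, Cc, D in *; lra).
  assert (J1 : I1v = 0) by (unfold I1v; lra). assert (J2 : I2v = 0) by (unfold I2v; lra).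
  rewrite HD, J1, J2 in F1, F2. rewrite HB, J1, J2 in F3, F4.
  assert (G1 : A * (gr*gr+gi*gi) = (p0*gr - q0*gi)^2 + (p0*gi + q0*gr)^2) by (unfold A; ring).
  assert (G2 : Cc * (gr*gr+gi*gi) = (r0*gr - s0*gi)^2 + (r0*gi + s0*gr)^2) by (unfold Cc; ring).
  rewrite F1, F2 in G1. rewrite F3, F4 in G2.
  assert (gr*gr+gi*gi = 0).
  { replace (gr*gr+gi*gi) with ((A+Cc)*(gr*gr+gi*gi)) by (rewrite HAC; ring). nra. }
  assert (gr = 0) by nra. assert (gi = 0) by nra.
  repeat split; unfold A, B, Cc, D, gr, gi in *; lra.
Qed.

Lemma onb_complete (x : bool -> qubit) : orthonormal_basis x -> forall a a',
  Csum2 (fun i => Cmul (Cconj (x i a)) (x i a')) = if Bool.eqb a a' then (1,0) else C0.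
Proof.
  intros H u u'. pose proof (H false false) as H1. pose proof (H true true) as H2. pose proof (H false true) as H3.
  clear H. unfold inner, Csum2, Cmul, Cadd, Cconj, C0 in *. simpl in *.
  destruct u, u'; simpl;
  destruct (x false false) as [p0 q0]; destruct (x false true) as [p1 q1];
  destruct (x true false) as [r0 s0]; destruct (x true true) as [r1 s1]; simpl in *;
  injection H1 as E1 E2; injection H2 as E3 E4; injection H3 as E5 E6;
  (destruct (complete_real p0 q0 p1 q1 r0 s0 r1 s1) as [K1 [K2 [K3 K4]]]; [lra|lra|lra|lra|]);
  f_equal; lra.
Qed.

Lemma onb_unit (x : bool -> qubit) i : orthonormal_basis x -> Rsum2 (fun k => Cnorm2 (x i k)) = 1.
Proof.
  intro H. specialize (H i i). rewrite Bool.eqb_reflx in H. unfold inner, Csum2, Cmul, Cadd, Cconj in H.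
  unfold Rsum2, Cnorm2. destruct (x i false) as [p q], (x i true) as [r s]. simpl in *.
  injection H; intros. lra.
Qed.


Definition RBm (phi : state3) (j j' : bool) : Defs.C :=
  Csum2 (fun a => Csum2 (fun c => Cmul (phi a j c) (Cconj (phi a j' c)))).

Definition Kx (x : bool -> qubit) a a' := Csum2 (fun i => Cmul (Cconj (x i a)) (x i a')).

Lemma rho_sum_expand (x : bool -> qubit) (phi : state3) j j' :
  Cadd (rho (post_state phi PA (x false)) j j') (rho (post_state phi PA (x true)) j j') =
  Csum2 (fun k => Csum2 (fun a => Csum2 (fun a' =>
    Cmul (Kx x a a') (Cmul (phi a j k) (Cconj (phi a' j' k)))))).
Proof.
  unfold rho, post_state, Kx, Csum2, Cmul, Cadd, Cconj. simpl. f_equal; ring.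
Qed.

Lemma rho_sum (x : bool -> qubit) (phi : state3) : orthonormal_basis x -> forall j j',
  Cadd (rho (post_state phi PA (x false)) j j') (rho (post_state phi PA (x true)) j j') = RBm phi j j'.
Proof.
  intros Hx j j'. rewrite rho_sum_expand. unfold Csum2. cbv beta.
  unfold Kx. rewrite !(onb_complete x Hx). simpl.
  unfold RBm, Csum2, Cmul, Cadd, Cconj. simpl. f_equal; ring.
Qed.

Definition ra (f : state2) := fst (rho f false false).
Definition rd (f : state2) := fst (rho f true true).
Definition rcr (f : state2) := fst (rho f false true).
Definition rci (f : state2) := snd (rho f false true).
Definition Rf (f : state2) := sqrt (Dq (ra f) (rd f) (rcr f) (rci f)).

Lemma rho_disc f : rho_tr f * rho_tr f - 4 * rho_det f = Dq (ra f) (rd f) (rcr f) (rci f).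
Proof. unfold rho_tr, rho_det, Dq, ra, rd, rcr, rci, rho, Csum2, Cmul, Cadd, Cconj, Cscale. simpl. ring. Qed.

Lemma rho_det_nonneg f : 0 <= rho_det f.
Proof.
  unfold rho_det, rho, Csum2, Cmul, Cadd, Cconj, Cscale. simpl.
  destruct (f false false) as [a b], (f false true) as [c d], (f true false) as [e g], (f true true) as [h k]. simpl.
  match goal with |- 0 <= ?E => assert (E = (a*h - b*k - (c*e - d*g))^2 + (a*k + b*h - (c*g + d*e))^2) by ring end.
  pose proof (pow2_ge_0 (a*h - b*k - (c*e - d*g))). pose proof (pow2_ge_0 (a*k + b*h - (c*g + d*e))). lra.
Qed.

Lemma ra_nonneg f : 0 <= ra f.
Proof. unfold ra, rho, Csum2, Cmul, Cadd, Cconj; simpl. nra. Qed.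
Lemma rd_nonneg f : 0 <= rd f.
Proof. unfold rd, rho, Csum2, Cmul, Cadd, Cconj; simpl. nra. Qed.

Lemma Rf_nonneg f : 0 <= Rf f.
Proof. apply sqrt_pos. Qed.

Lemma Rf_le f : Rf f <= ra f + rd f.
Proof.
  unfold Rf. apply sqrt_le_of_sq. pose proof (ra_nonneg f); pose proof (rd_nonneg f); lra.
  rewrite <- rho_disc. pose proof (rho_det_nonneg f). unfold rho_tr. fold (ra f) (rd f). lra.
Qed.

Lemma scaled_rho f r j j' : rho (fun j k => Cscale r (f j k)) j j' = Cscale (r*r) (rho f j j').
Proof. unfold rho, Csum2, Cmul, Cadd, Cconj, Cscale; simpl. f_equal; ring. Qed.

Lemma pL_div p l : 0 < p -> 0 <= l -> p * L (l / p) = L l - l * ln p.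
Proof.
  intros Hp Hl. destruct Hl as [Hl|Hl].
  - rewrite !L_pos; [|lra|apply Rdiv_lt_0_compat; lra]. rewrite ln_div by lra. field. lra.
  - subst. unfold Rdiv. rewrite Rmult_0_l, !L_nonpos by lra. ring.
Qed.

Lemma ent_scaled f p : 0 < p -> ra f + rd f = p ->
  p * ent_entropy (fun j k => Cscale (/ sqrt p) (f j k)) = G p (Rf f) / ln 2.
Proof.
  intros Hp Ht. pose proof ln2_pos. pose proof (Rf_le f). pose proof (Rf_nonneg f).
  assert (Hs : / sqrt p * / sqrt p = / p).
  { rewrite <- Rinv_mult. rewrite sqrt_sqrt; lra. }
  assert (Etr : rho_tr (fun j k => Cscale (/ sqrt p) (f j k)) = rho_tr f / p).
  { unfold rho_tr. rewrite !scaled_rho. unfold Cscale; simpl. rewrite Hs. field. lra. }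
  assert (Edet : rho_det (fun j k => Cscale (/ sqrt p) (f j k)) = rho_det f / (p * p)).
  { unfold rho_det. rewrite !scaled_rho. unfold Cscale, Cmul, Cadd; simpl. rewrite Hs. field. lra. }
  assert (Eeig : forall s, rho_eig (fun j k => Cscale (/ sqrt p) (f j k)) s =
                  ((p + (if s then 1 else -1) * Rf f) / 2) / p).
  { intro s. unfold rho_eig. rewrite Etr, Edet.
    replace (rho_tr f / p * (rho_tr f / p) - 4 * (rho_det f / (p * p))) with
      ((rho_tr f * rho_tr f - 4 * rho_det f) * (/ p * / p)) by (field; lra).
    rewrite sqrt_mult. rewrite sqrt_square. rewrite rho_disc. fold (Rf f).
    unfold rho_tr. fold (ra f) (rd f). rewrite Ht. field. lra.
    assert (0 < / p) by (apply Rinv_0_lt_compat; lra). nra.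
    rewrite rho_disc. apply Dq_nonneg.
    assert (0 < / p) by (apply Rinv_0_lt_compat; lra). nra. }
  unfold ent_entropy, Rsum2. rewrite !Eeig. rewrite !xlog2x_L.
  assert (E: p * - (L ((p + -1 * Rf f) / 2 / p) / ln 2 + L ((p + 1 * Rf f) / 2 / p) / ln 2) =
    - (p * L ((p + -1 * Rf f) / 2 / p) + p * L ((p + 1 * Rf f) / 2 / p)) / ln 2) by (field; lra).
  rewrite E. rewrite !pL_div by lra.
  unfold G, g2. replace ((p + Rf f) / 2 + (p - Rf f) / 2) with p by field.
  rewrite (L_pos p Hp).
  replace ((p + -1 * Rf f) / 2) with ((p - Rf f) / 2) by lra.
  replace ((p + 1 * Rf f) / 2) with ((p + Rf f) / 2) by lra. field. lra.
Qed.

Lemma post_prob_tr psi X y : post_prob psi X y = ra (post_state psi X y) + rd (post_state psi X y).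
Proof. unfold post_prob, ra, rd, rho, Rsum2, Csum2, Cnorm2, Cmul, Cadd, Cconj. simpl. ring. Qed.

Lemma wt_eq psi X y : weighted_term psi X y = G (post_prob psi X y) (Rf (post_state psi X y)) / ln 2.
Proof.
  unfold weighted_term. destruct (Req_EM_T (post_prob psi X y) 0) as [H|H].
  - rewrite H. pose proof (Rf_le (post_state psi X y)). pose proof (Rf_nonneg (post_state psi X y)).
    rewrite <- post_prob_tr, H in H0. replace (Rf (post_state psi X y)) with 0 by lra.
    unfold G. replace ((0+0)/2) with 0 by field. replace ((0-0)/2) with 0 by field.
    rewrite g2_zero_l. field. pose proof ln2_pos; lra.
  - apply ent_scaled. 2: symmetry; apply post_prob_tr.
    rewrite post_prob_tr in *. pose proof (ra_nonneg (post_state psi X y)). pose proof (rd_nonneg (post_state psi X y)). lra.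
Qed.


Definition Ma phi := fst (RBm phi false false).
Definition Md phi := fst (RBm phi true true).
Definition Mcr phi := fst (RBm phi false true).
Definition Mci phi := snd (RBm phi false true).
Definition RM phi := sqrt (Dq (Ma phi) (Md phi) (Mcr phi) (Mci phi)).

Lemma M_trace phi : is_unit3 phi -> Ma phi + Md phi = 1.
Proof. unfold is_unit3, Ma, Md, RBm, Rsum2, Csum2, Cnorm2, Cmul, Cadd, Cconj. simpl. intro H. rewrite <- H. ring. Qed.

Lemma locc_bound phi x : orthonormal_basis x -> is_unit3 phi ->
  locc_average phi PA x <= G 1 (RM phi) / ln 2.
Proof.
  intros Hx Hu. unfold locc_average, Rsum2. rewrite !wt_eq.
  set (f0 := post_state phi PA (x false)). set (f1 := post_state phi PA (x true)).
  assert (Ea : Ma phi = ra f0 + ra f1) by (unfold Ma, ra, f0, f1; rewrite <- (rho_sum x phi Hx); reflexivity).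
  assert (Ed : Md phi = rd f0 + rd f1) by (unfold Md, rd, f0, f1; rewrite <- (rho_sum x phi Hx); reflexivity).
  assert (Ec : Mcr phi = rcr f0 + rcr f1) by (unfold Mcr, rcr, f0, f1; rewrite <- (rho_sum x phi Hx); reflexivity).
  assert (Ei : Mci phi = rci f0 + rci f1) by (unfold Mci, rci, f0, f1; rewrite <- (rho_sum x phi Hx); reflexivity).
  rewrite !post_prob_tr. fold f0 f1.
  pose proof (M_trace phi Hu).
  pose proof (Rf_le f0). pose proof (Rf_le f1). pose proof (Rf_nonneg f0). pose proof (Rf_nonneg f1).
  assert (RM phi <= Rf f0 + Rf f1).
  { unfold RM, Rf. rewrite Ea, Ed, Ec, Ei. apply Dq_triangle. }
  assert (0 <= RM phi) by apply sqrt_pos.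
  pose proof (G_superadd (ra f0 + rd f0) (Rf f0) (ra f1 + rd f1) (Rf f1) (RM phi)
     ltac:(lra) ltac:(lra) H5 H4).
  replace (ra f0 + rd f0 + (ra f1 + rd f1)) with 1 in H6 by lra.
  pose proof ln2_pos.
  unfold Rdiv. rewrite <- Rmult_plus_distr_r. apply Rmult_le_compat_r; [|lra].
  left; apply Rinv_0_lt_compat; lra.
Qed.

Lemma CS4 (u1 u2 u3 u4 v1 v2 v3 v4 : Defs.C) :
  Cnorm2 (Cadd (Cadd (Cmul u1 v1) (Cmul u2 v2)) (Cadd (Cmul u3 v3) (Cmul u4 v4))) <=
  (Cnorm2 u1 + Cnorm2 u2 + Cnorm2 u3 + Cnorm2 u4) * (Cnorm2 v1 + Cnorm2 v2 + Cnorm2 v3 + Cnorm2 v4).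
Proof.
  destruct u1 as [a1 b1], u2 as [a2 b2], u3 as [a3 b3], u4 as [a4 b4].
  destruct v1 as [c1 d1], v2 as [c2 d2], v3 as [c3 d3], v4 as [c4 d4].
  unfold Cnorm2, Cadd, Cmul. simpl.
  (* |u_k conj v_l - u_l conj v_k|^2 *)
  set (T := fun a b c d a' b' c' d' =>
     (a*c' + b*d' - (a'*c + b'*d))^2 + (b*c' - a*d' - (b'*c - a'*d))^2).
  match goal with |- ?l <= ?r => assert (r - l = T a1 b1 c1 d1 a2 b2 c2 d2 + T a1 b1 c1 d1 a3 b3 c3 d3 +
     T a1 b1 c1 d1 a4 b4 c4 d4 + T a2 b2 c2 d2 a3 b3 c3 d3 + T a2 b2 c2 d2 a4 b4 c4 d4 +
     T a3 b3 c3 d3 a4 b4 c4 d4) by (unfold T; ring) end.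
  assert (forall a b c d a' b' c' d', 0 <= T a b c d a' b' c' d').
  { intros. unfold T. pose proof (pow2_ge_0 (a*c' + b*d' - (a'*c + b'*d))).
    pose proof (pow2_ge_0 (b*c' - a*d' - (b'*c - a'*d))). lra. }
  pose proof (H0 a1 b1 c1 d1 a2 b2 c2 d2). pose proof (H0 a1 b1 c1 d1 a3 b3 c3 d3).
  pose proof (H0 a1 b1 c1 d1 a4 b4 c4 d4). pose proof (H0 a2 b2 c2 d2 a3 b3 c3 d3).
  pose proof (H0 a2 b2 c2 d2 a4 b4 c4 d4). pose proof (H0 a3 b3 c3 d3 a4 b4 c4 d4). lra.
Qed.

Lemma amp_split phi f g h :
  amp3 phi f g h =
  Cadd (Cadd (Cmul (Cmul (Cconj (f false)) (Cconj (h false))) (post_state phi PB g false false))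
             (Cmul (Cmul (Cconj (f false)) (Cconj (h true))) (post_state phi PB g false true)))
       (Cadd (Cmul (Cmul (Cconj (f true)) (Cconj (h false))) (post_state phi PB g true false))
             (Cmul (Cmul (Cconj (f true)) (Cconj (h true))) (post_state phi PB g true true))).
Proof. unfold amp3, post_state, Csum2, Cmul, Cadd, Cconj. simpl. f_equal; ring. Qed.

Lemma Cnorm2_mul_conj u v : Cnorm2 (Cmul (Cconj u) (Cconj v)) = Cnorm2 u * Cnorm2 v.
Proof. destruct u, v. unfold Cnorm2, Cmul, Cconj; simpl. ring. Qed.

Lemma amp_CS phi f g h : Rsum2 (fun k => Cnorm2 (f k)) = 1 -> Rsum2 (fun k => Cnorm2 (h k)) = 1 ->
  Cnorm2 (amp3 phi f g h) <= post_prob phi PB g.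
Proof.
  intros Hf Hh. rewrite amp_split. eapply Rle_trans. apply CS4.
  rewrite !Cnorm2_mul_conj. unfold Rsum2 in Hf, Hh.
  replace (Cnorm2 (f false) * Cnorm2 (h false) + Cnorm2 (f false) * Cnorm2 (h true) +
     Cnorm2 (f true) * Cnorm2 (h false) + Cnorm2 (f true) * Cnorm2 (h true)) with 1.
  unfold post_prob, Rsum2. lra.
  rewrite <- Hf. rewrite <- Rmult_1_r at 1. rewrite <- Hh. ring.
Qed.

Lemma qform_real a d cr ci m n wr wi : m + n = 1 -> wr*wr + wi*wi = m * n ->
  a*m + d*n + 2*(wr*cr - wi*ci) <= (a + d + sqrt (Dq a d cr ci)) / 2.
Proof.
  intros H1 H2.
  set (Z := (a-d)*(m-n) + 4*(wr*cr - wi*ci)).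
  assert (EZ : 2*(a*m + d*n + 2*(wr*cr - wi*ci)) - (a+d) = Z) by (unfold Z; rewrite <- (Rmult_1_r (a+d)) at 1; rewrite <- H1; ring).
  assert (Z <= sqrt (Dq a d cr ci)).
  { apply le_sqrt_of_sq.
    assert (E: Dq a d cr ci * ((m-n)^2 + 4*(wr*wr+wi*wi)) - Z*Z =
      4*((a-d)*wr - (m-n)*cr)^2 + 4*((a-d)*wi + (m-n)*ci)^2 + 16*(cr*wi + ci*wr)^2) by (unfold Dq, Z; ring).
    assert ((m-n)^2 + 4*(wr*wr+wi*wi) = 1). { rewrite H2. replace 1 with ((m+n)^2) by (rewrite H1; ring). ring. }
    rewrite H in E.
    pose proof (pow2_ge_0 ((a-d)*wr - (m-n)*cr)). pose proof (pow2_ge_0 ((a-d)*wi + (m-n)*ci)).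
    pose proof (pow2_ge_0 (cr*wi + ci*wr)). lra. }
  lra.
Qed.

Lemma post_prob_qform phi g :
  post_prob phi PB g = Ma phi * Cnorm2 (g false) + Md phi * Cnorm2 (g true) +
    2 * (fst (Cmul (Cconj (g false)) (g true)) * Mcr phi - snd (Cmul (Cconj (g false)) (g true)) * Mci phi).
Proof. unfold post_prob, post_state, Ma, Md, Mcr, Mci, RBm, Rsum2, Csum2, Cnorm2, Cmul, Cadd, Cconj. simpl. ring. Qed.

Lemma outcome_bound phi f g h : is_unit3 phi ->
  Rsum2 (fun k => Cnorm2 (f k)) = 1 -> Rsum2 (fun k => Cnorm2 (g k)) = 1 -> Rsum2 (fun k => Cnorm2 (h k)) = 1 ->
  Cnorm2 (amp3 phi f g h) <= (1 + RM phi) / 2.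
Proof.
  intros Hu Hf Hg Hh. eapply Rle_trans. apply amp_CS; auto.
  rewrite post_prob_qform. rewrite <- (M_trace phi Hu). unfold RM.
  apply qform_real. apply Hg.
  unfold Cnorm2, Cmul, Cconj. destruct (g false), (g true). simpl. ring.
Qed.


Lemma parseval_expand (x : bool -> qubit) (w : qubit) :
  Rsum2 (fun i => Cnorm2 (inner (x i) w)) =
  fst (Csum2 (fun k => Csum2 (fun k' => Cmul (Kx x k k') (Cmul (w k) (Cconj (w k')))))).
Proof. unfold Rsum2, Kx, inner, Csum2, Cnorm2, Cmul, Cadd, Cconj. simpl. ring. Qed.

Lemma parseval (x : bool -> qubit) : orthonormal_basis x -> forall w : qubit,
  Rsum2 (fun i => Cnorm2 (inner (x i) w)) = Rsum2 (fun k => Cnorm2 (w k)).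
Proof.
  intros Hx w. rewrite parseval_expand. unfold Csum2. cbv beta.
  unfold Kx. rewrite !(onb_complete x Hx). simpl.
  unfold Rsum2, Cnorm2, Cmul, Cadd, Cconj, C0. simpl. ring.
Qed.

Lemma amp_inner phi f g h :
  amp3 phi f g h = inner h (fun c => inner g (fun b => inner f (fun a => phi a b c))).
Proof. unfold amp3, inner, Csum2, Cmul, Cadd, Cconj. simpl. f_equal; ring. Qed.

Lemma sum_std (phi : state3) (b1 : bool -> qubit) (b2 : bool -> bool -> qubit) (b3 : bool -> bool -> bool -> qubit) :
  orthonormal_basis b1 -> (forall i1, orthonormal_basis (b2 i1)) -> (forall i1 i2, orthonormal_basis (b3 i1 i2)) ->
  Rsum2 (fun i1 => Rsum2 (fun i2 => Rsum2 (fun i3 => Cnorm2 (amp3 phi (b1 i1) (b2 i1 i2) (b3 i1 i2 i3))))) =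
  Rsum2 (fun a => Rsum2 (fun b => Rsum2 (fun c => Cnorm2 (phi a b c)))).
Proof.
  intros H1 H2 H3.
  assert (S3 : forall i1 i2, Rsum2 (fun i3 => Cnorm2 (amp3 phi (b1 i1) (b2 i1 i2) (b3 i1 i2 i3))) =
     Rsum2 (fun c => Cnorm2 (inner (b2 i1 i2) (fun b => inner (b1 i1) (fun a => phi a b c))))).
  { intros i1 i2. rewrite <- (parseval (b3 i1 i2) (H3 i1 i2) (fun c => inner (b2 i1 i2) (fun b => inner (b1 i1) (fun a => phi a b c)))).
    unfold Rsum2. rewrite !amp_inner. reflexivity. }
  assert (S2 : forall i1, Rsum2 (fun i2 => Rsum2 (fun c => Cnorm2 (inner (b2 i1 i2) (fun b => inner (b1 i1) (fun a => phi a b c))))) =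
     Rsum2 (fun c => Rsum2 (fun b => Cnorm2 (inner (b1 i1) (fun a => phi a b c))))).
  { intros i1. pose proof (parseval (b2 i1) (H2 i1) (fun b => inner (b1 i1) (fun a => phi a b false))).
    pose proof (parseval (b2 i1) (H2 i1) (fun b => inner (b1 i1) (fun a => phi a b true))).
    unfold Rsum2 in *. lra. }
  assert (S1 : Rsum2 (fun i1 => Rsum2 (fun c => Rsum2 (fun b => Cnorm2 (inner (b1 i1) (fun a => phi a b c))))) =
     Rsum2 (fun a => Rsum2 (fun b => Rsum2 (fun c => Cnorm2 (phi a b c))))).
  { pose proof (parseval b1 H1 (fun a => phi a false false)). pose proof (parseval b1 H1 (fun a => phi a false true)).
    pose proof (parseval b1 H1 (fun a => phi a true false)). pose proof (parseval b1 H1 (fun a => phi a true true)).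
    unfold Rsum2 in *. lra. }
  rewrite <- S1. pose proof (S3 false false). pose proof (S3 false true). pose proof (S3 true false).
  pose proof (S3 true true). pose proof (S2 false). pose proof (S2 true). unfold Rsum2 in *. lra.
Qed.


Definition permst (o1 o2 o3 : party) (psi : state3) : state3 :=
  fun i j k =>
    let sel X := if party_eqb X o1 then i else if party_eqb X o2 then j else k in
    psi (sel PA) (sel PB) (sel PC).

Lemma amp3_perm o1 o2 o3 : o1 <> o2 -> o1 <> o3 -> o2 <> o3 ->
  forall psi (f : party -> qubit),
  amp3 psi (f PA) (f PB) (f PC) = amp3 (permst o1 o2 o3 psi) (f o1) (f o2) (f o3).
Proof.
  intros H1 H2 H3 psi f.
  destruct o1, o2, o3; try congruence;
  unfold amp3, permst, Csum2, Cmul, Cadd, Cconj; simpl; f_equal; ring.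
Qed.

Lemma unit_perm o1 o2 o3 psi : o1 <> o2 -> o1 <> o3 -> o2 <> o3 ->
  is_unit3 psi -> is_unit3 (permst o1 o2 o3 psi).
Proof.
  intros H1 H2 H3 H. unfold is_unit3 in *. rewrite <- H.
  destruct o1, o2, o3; try congruence; unfold permst, Rsum2; simpl; ring.
Qed.

Lemma party_eqb_refl X : party_eqb X X = true.
Proof. destruct X; reflexivity. Qed.
Lemma party_eqb_neq X Y : X <> Y -> party_eqb X Y = false.
Proof. destruct X, Y; simpl; congruence. Qed.

Lemma scheme_prob_std psi s i1 i2 i3 : valid_scheme s ->
  scheme_prob psi s i1 i2 i3 =
  Cnorm2 (amp3 (permst (ord1 s) (ord2 s) (ord3 s) psi) (bas1 s i1) (bas2 s i1 i2) (bas3 s i1 i2 i3)).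
Proof.
  intros [H1 [H2 [H3 _]]]. unfold scheme_prob.
  rewrite (amp3_perm _ _ _ H1 H2 H3 psi (scheme_vec s i1 i2 i3)).
  unfold scheme_vec. rewrite !party_eqb_refl.
  rewrite (party_eqb_neq _ _ (not_eq_sym H1)), (party_eqb_neq _ _ (not_eq_sym H2)),
    (party_eqb_neq _ _ (not_eq_sym H3)). reflexivity.
Qed.

Definition plist (p : bool -> bool -> bool -> R) : list R :=
  p false false false :: p false false true :: p false true false :: p false true true ::
  p true false false :: p true false true :: p true true false :: p true true true :: nil.

Lemma scheme_sum psi s : is_unit3 psi -> valid_scheme s -> suml (plist (scheme_prob psi s)) = 1.
Proof.
  intros Hu Hs. pose proof Hs as Hs'. destruct Hs' as [H1 [H2 [H3 [B1 [B2 B3]]]]].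
  pose proof (sum_std (permst (ord1 s) (ord2 s) (ord3 s) psi) (bas1 s) (bas2 s) (bas3 s) B1 B2 B3) as E.
  pose proof (unit_perm _ _ _ psi H1 H2 H3 Hu) as U. unfold is_unit3 in U. rewrite U in E.
  rewrite <- E. unfold plist, suml, Rsum2. rewrite !(scheme_prob_std psi s) by auto. ring.
Qed.

Lemma scheme_vec_unit s i1 i2 i3 Y : valid_scheme s ->
  Rsum2 (fun k => Cnorm2 (scheme_vec s i1 i2 i3 Y k)) = 1.
Proof.
  intros [_ [_ [_ [B1 [B2 B3]]]]]. unfold scheme_vec.
  destruct (party_eqb Y (ord1 s)). apply onb_unit; auto.
  destruct (party_eqb Y (ord2 s)). apply onb_unit; auto. apply onb_unit; auto.
Qed.

Definition pX (X : party) : party * party * party :=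
  match X with PA => (PA, PB, PC) | PB => (PB, PA, PC) | PC => (PC, PA, PB) end.

Definition psiX (X : party) (psi : state3) : state3 :=
  match pX X with (o1, o2, o3) => permst o1 o2 o3 psi end.

Lemma locc_perm psi X x : locc_average psi X x = locc_average (psiX X psi) PA x.
Proof. destruct X; reflexivity. Qed.

Lemma unit_psiX X psi : is_unit3 psi -> is_unit3 (psiX X psi).
Proof. intro H. destruct X; unfold psiX; simpl; apply unit_perm; auto; congruence. Qed.

Lemma prob_bound psi s X i1 i2 i3 : is_unit3 psi -> valid_scheme s ->
  scheme_prob psi s i1 i2 i3 <= (1 + RM (psiX X psi)) / 2.
Proof.
  intros Hu Hs. pose proof (unit_psiX X psi Hu) as U. unfold scheme_prob.
  destruct X; unfold psiX in *; simpl in *.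
  - rewrite (amp3_perm PA PB PC ltac:(congruence) ltac:(congruence) ltac:(congruence) psi (scheme_vec s i1 i2 i3)).
    apply outcome_bound; auto; apply scheme_vec_unit; auto.
  - rewrite (amp3_perm PB PA PC ltac:(congruence) ltac:(congruence) ltac:(congruence) psi (scheme_vec s i1 i2 i3)).
    apply outcome_bound; auto; apply scheme_vec_unit; auto.
  - rewrite (amp3_perm PC PA PB ltac:(congruence) ltac:(congruence) ltac:(congruence) psi (scheme_vec s i1 i2 i3)).
    apply outcome_bound; auto; apply scheme_vec_unit; auto.
Qed.

Lemma RM_le_1 phi x : orthonormal_basis x -> is_unit3 phi -> RM phi <= 1.
Proof.
  intros Hx Hu.
  set (f0 := post_state phi PA (x false)). set (f1 := post_state phi PA (x true)).
  assert (Ea : Ma phi = ra f0 + ra f1) by (unfold Ma, ra, f0, f1; rewrite <- (rho_sum x phi Hx); reflexivity).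
  assert (Ed : Md phi = rd f0 + rd f1) by (unfold Md, rd, f0, f1; rewrite <- (rho_sum x phi Hx); reflexivity).
  assert (Ec : Mcr phi = rcr f0 + rcr f1) by (unfold Mcr, rcr, f0, f1; rewrite <- (rho_sum x phi Hx); reflexivity).
  assert (Ei : Mci phi = rci f0 + rci f1) by (unfold Mci, rci, f0, f1; rewrite <- (rho_sum x phi Hx); reflexivity).
  pose proof (M_trace phi Hu).
  pose proof (Rf_le f0). pose proof (Rf_le f1).
  assert (RM phi <= Rf f0 + Rf f1).
  { unfold RM, Rf. rewrite Ea, Ed, Ec, Ei. apply Dq_triangle. }
  lra.
Qed.

Lemma shannon_sumL p : shannon3 p = - sumL (plist p) / ln 2.
Proof.
  pose proof ln2_pos. unfold shannon3, Rsum2, plist, sumL. rewrite !xlog2x_L. field. lra.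
Qed.

Theorem theorem1 (psi : state3) (Hpsi : is_unit3 psi)
  (s : scheme) (Hs : valid_scheme s)
  (X : party) (x : bool -> qubit) (Hx : orthonormal_basis x) :
  locc_average psi X x <= scheme_entropy psi s.
Proof.
  rewrite locc_perm. set (phi := psiX X psi).
  assert (Hu : is_unit3 phi) by (apply unit_psiX; auto).
  pose proof (locc_bound phi x Hx Hu) as H1.
  pose proof (RM_le_1 phi x Hx Hu) as H2.
  assert (H3 : 0 <= RM phi) by apply sqrt_pos.
  set (lam := (1 + RM phi) / 2).
  assert (H4 : sumL (plist (scheme_prob psi s)) <= L lam + L (1 - lam)).
  { apply entropy_bound.
    - intros y Hy. unfold plist in Hy. simpl in Hy.
      assert (forall i1 i2 i3, 0 <= scheme_prob psi s i1 i2 i3 <= lam).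
      { intros. split. unfold scheme_prob, Cnorm2. nra. apply prob_bound; auto. }
      repeat (destruct Hy as [Hy|Hy]; [subst; apply H|]). contradiction.
    - apply scheme_sum; auto.
    - unfold lam; lra. }
  unfold scheme_entropy. rewrite shannon_sumL.
  assert (G 1 (RM phi) = - (L lam + L (1 - lam))).
  { unfold G, g2, lam. replace ((1 + RM phi) / 2 + (1 - RM phi) / 2) with 1 by field.
    replace (1 - (1 + RM phi) / 2) with ((1 - RM phi) / 2) by field.
    rewrite (L_pos 1) by lra. rewrite ln_1. ring. }
  rewrite H in H1. pose proof ln2_pos.
  apply Rle_trans with (1 := H1). unfold Rdiv. apply Rmult_le_compat_r. left; apply Rinv_0_lt_compat; lra. lra.
Qed.
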